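(* On $\mathcal H$, the operator $H_{\rm string}$ is positive semidefinite, its nullspace is exactly $S_{\rm string}$, and its smallest nonzero eigenvalue is $2$; more precisely, each particle-position basis configuration (one occupied edge per line) whose occupied edges form $L$ connected components is an eigenvector of $H_{\rm string}$ with eigenvalue $2L-2$. Moreover $H_{\rm string}$ commutes with every $n_{e,\alpha}$ and with every $H^p_{\rm prop}$, hence with $H(\lambda)$ for all $\lambda\in[0,1]$.
   Context: Grid. Fix $n\ge1$. Vertices are $(i,j)$ with $i,j\in\{0,\dots,n\}$; $(0,0)$ is the top and $(n,n)$ the bottom vertex. For a vertex $(i,j)$ and $x\in\{0,1\}$, the edge $(i,j,x)$ joins $(i,j)$ (upper endpoint) to $(i+1-x,j+x)$ (lower endpoint), whenever the latter is a vertex. It lies on line $w=i+j+1$ and has horizontal coordinate $t=n+j-i+x$. $E_w$ is the set of edges on line $w$. $\mathcal H=\bigotimes_{w=1}^{2n}(\mathbb C^{E_w}\otimes\mathbb C^2)$ with basis $|e,\alpha\rangle_w$ (particle $w$ on edge $e$, qubit $\alpha$); $n_{e,\alpha}=|e,\alpha\rangle\langle e,\alpha|_w$, $N_e=n_{e,0}+n_{e,1}$. Strings: for $z\in\{0,1\}^{2n}$ of weight $n$, $v_0=(0,0)$, $v_s=(\#\{k\le s:z_k=0\},\#\{k\le s:z_k=1\})$, $e_s(z)=(i,j,z_s)$ with $(i,j)=v_{s-1}$; $|x\rangle|z\rangle=\bigotimes_w|e_w(z),x_w\rangle_w$; $S_{\rm string}=\mathrm{span}\{|x\rangle|z\rangle: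 x\in\{0,1\}^{2n},\mathrm{wt}(z)=n\}$. $H_{\rm string}=\sum_{v\notin\{(0,0),(n,n)\}}(N^{\rm up}_v+N^{\rm down}_v-2N^{\rm up}_vN^{\rm down}_v)$ where $N^{\rm up}_v$ (resp. $N^{\rm down}_v$) is the sum of $N_e$ over existing edges $e$ with lower (resp. upper) endpoint $v$. Plaquette $p=(i,j)$, $i,j\in\{0,\dots,n-1\}$: $w_p=i+j+1$, left edges $e_1=(i,j,0)$, $e_2=(i+1,j,1)$, right edges $e_3=(i,j,1)$, $e_4=(i,j+1,0)$, arbitrary two-qubit unitary $U_p$; $H^p_{\rm prop}=-\sum_{\alpha,\beta,\gamma,\delta}\langle\beta\delta|U_p|\alpha\gamma\rangle|e_3,\beta\rangle\langle e_1,\alpha|_{w_p}\otimes|e_4,\delta\rangle\langle e_2,\gamma|_{w_p+1}+\text{h.c.}$. $H(\lambda)=H_{\rm string}+\sum_p(N_{e_1}N_{e_2}+N_{e_3}N_{e_4}+\lambda H^p_{\rm prop})+\sqrt{1-\lambda^2}(N_{(0,0,1)}+N_{(n-1,n,0)})+\sum_w\sum_{e\in E_w,t(e)\le n}n_{e,1}$. *)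

(* Defs.v *)
From HB Require Import structures.
From mathcomp Require Import all_boot all_order all_algebra all_field.
Set Implicit Arguments. Unset Strict Implicit. Unset Printing Implicit Defensive.
Import Order.TTheory GRing.Theory Num.Theory.
Local Open Scope ring_scope.
Local Open Scope sesquilinear_scope.

Section Grid.
Variable n : nat.

(* Edge (i,j,x): upper endpoint (i,j); i,j in {0..n}. *)
Definition Edge := ('I_n.+1 * 'I_n.+1 * bool)%type.
Definition e_i (e : Edge) : nat := e.1.1.
Definition e_j (e : Edge) : nat := e.1.2.
Definition e_x (e : Edge) : bool := e.2.
Definition upper (e : Edge) : nat * nat := (e_i e, e_j e).
Definition lower (e : Edge) : nat * nat :=
  ((e_i e).+1 - e_x e, e_j e + e_x e)%N.
(* the edge exists iff its lower endpoint is a vertex *)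
Definition edge_ok (e : Edge) : bool :=
  ((e_i e).+1 - e_x e <= n)%N && (e_j e + e_x e <= n)%N.
Definition line (e : Edge) : nat := (e_i e + e_j e).+1.
Definition tcoord (e : Edge) : int := (n%:Z + (e_j e)%:Z - (e_i e)%:Z + (e_x e : nat)%:Z)%R.

(* Basis configurations: particle w (w = k+1 for k : 'I_(2n)) sits on an
   existing edge of line w, with a qubit value. *)
Definition conf_ok (c : {ffun 'I_(n.*2) -> Edge * bool}) : bool :=
  [forall k : 'I_(n.*2), edge_ok (c k).1 && (line (c k).1 == k.+1)].
Definition Conf := {c : {ffun 'I_(n.*2) -> Edge * bool} | conf_ok c}.
Definition cf (c : Conf) : {ffun 'I_(n.*2) -> Edge * bool} := val c.

Definition hdim := #|{: Conf}|.
Definition Op := 'M[algC]_hdim.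
Definition conf_of (i : 'I_hdim) : Conf := enum_val i.
Definition mkop (F : Conf -> Conf -> algC) : Op :=
  \matrix_(i, j) F (conf_of i) (conf_of j).
Definition ket (c : Conf) : 'cV[algC]_hdim := \col_i ((conf_of i == c)%:R).

(* |e',a'><e,a| acting on the particle of line (line e), identity elsewhere *)
Definition ketbra (e' : Edge) (a' : bool) (e : Edge) (a : bool) : Op :=
  mkop (fun c' c => ([forall k : 'I_(n.*2),
     if k.+1 == line e then (cf c' k == (e', a')) && (cf c k == (e, a))
     else cf c' k == cf c k])%:R).

Definition nop (e : Edge) (a : bool) : Op := ketbra e a e a.
Definition Nop (e : Edge) : Op := nop e false + nop e true.

Definition Nup (v : nat * nat) : Op :=
  \sum_(e : Edge | edge_ok e && (lower e == v)) Nop e.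
Definition Ndown (v : nat * nat) : Op :=
  \sum_(e : Edge | edge_ok e && (upper e == v)) Nop e.

Definition is_vertex (v : nat * nat) : bool := (v.1 <= n)%N && (v.2 <= n)%N.

Definition Hstring : Op :=
  \sum_(v : 'I_n.+1 * 'I_n.+1 |
        ((val v.1, val v.2) != (0%N, 0%N)) && ((val v.1, val v.2) != (n, n)))
    (Nup (val v.1, val v.2) + Ndown (val v.1, val v.2)
     - (Nup (val v.1, val v.2) *m Ndown (val v.1, val v.2)) *+ 2).

(* Strings: z in {0,1}^{2n} of weight n; the s-th edge (s = k+1) starts at
   v_{s-1} = (#{l<k : z_l = 0}, #{l<k : z_l = 1}) and has x = z_s. *)
Definition str_edge (z : {ffun 'I_(n.*2) -> bool}) (k : 'I_(n.*2)) (e : Edge) : bool :=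
  [&& e_i e == #|[set l : 'I_(n.*2) | (l < k)%N & ~~ z l]|,
      e_j e == #|[set l : 'I_(n.*2) | (l < k)%N & z l]| &
      e_x e == z k].
Definition is_string (c : Conf) : bool :=
  [exists z : {ffun 'I_(n.*2) -> bool},
     (#|[set k | z k]| == n) && [forall k, str_edge z k (cf c k).1]].

Definition occupied (c : Conf) : {set Edge} := [set (cf c k).1 | k : 'I_(n.*2)].
Definition share (e f : Edge) : bool :=
  [|| upper e == upper f, upper e == lower f, lower e == upper f | lower e == lower f].
Definition occ_adj (c : Conf) : rel Edge :=
  fun e f => [&& e \in occupied c, f \in occupied c & share e f].
Definition ncomp (c : Conf) : nat := n_comp (occ_adj c) (occupied c).

Definition psdmx (A : Op) : Prop :=
  A = A ^t* /\ forall v : 'cV[algC]_hdim, 0 <= ((v ^t*) *m A *m v) 0 0.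

Definition pl_e1 (i j : 'I_n) : Edge := (widen_ord (leqnSn n) i, widen_ord (leqnSn n) j, false).
Definition pl_e2 (i j : 'I_n) : Edge := (lift ord0 i, widen_ord (leqnSn n) j, true).
Definition pl_e3 (i j : 'I_n) : Edge := (widen_ord (leqnSn n) i, widen_ord (leqnSn n) j, true).
Definition pl_e4 (i j : 'I_n) : Edge := (widen_ord (leqnSn n) i, lift ord0 j, false).

Definition qidx (a b : bool) : 'I_4 := inord (2 * a + b)%N.

Definition Hprop (U : 'M[algC]_4) (i j : 'I_n) : Op :=
  let A := \sum_(a : bool) \sum_(b : bool) \sum_(g : bool) \sum_(d : bool)
     (U (qidx b d) (qidx a g) *: (ketbra (pl_e3 i j) b (pl_e1 i j) a
                                   *m ketbra (pl_e4 i j) d (pl_e2 i j) g)) in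
  - A - A ^t*.

Definition Hlam (U : 'I_n -> 'I_n -> 'M[algC]_4) (lam : algC) : Op :=
  Hstring
  + \sum_(i : 'I_n) \sum_(j : 'I_n)
      (Nop (pl_e1 i j) *m Nop (pl_e2 i j) + Nop (pl_e3 i j) *m Nop (pl_e4 i j)
       + lam *: Hprop (U i j) i j)
  + sqrtC (1 - lam ^+ 2) *: (\sum_(e : Edge | (e_i e == 0%N) && (e_j e == 0%N) && e_x e) Nop e
                             + \sum_(e : Edge | (e_i e == n.-1) && (e_j e == n) && ~~ e_x e) Nop e)
  + \sum_(e : Edge | edge_ok e && (tcoord e <= n%:Z)%R) nop e true.

End Grid.

(* Main.v *)
Require Import Defs.
From HB Require Import structures.
From mathcomp Require Import all_boot all_order all_algebra all_field.
From mathcomp Require Import zify ring.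
Import Order.TTheory GRing.Theory Num.Theory.
Set Implicit Arguments. Unset Strict Implicit. Unset Printing Implicit Defensive.

Local Open Scope ring_scope.

Section Work.
Variable n : nat.
Local Notation m := (n.*2).
Local Notation Conf := (Conf n).
Local Notation Edge := (Edge n).
Local Notation Op := (Op n).

Definition Dg (h : Conf -> algC) : Op :=
  \matrix_(i, j) ((i == j)%:R * h (conf_of j)).

Lemma eq_Dg f g : f =1 g -> Dg f = Dg g.
Proof. by move=> H; apply/matrixP => i j; rewrite !mxE H. Qed.

Lemma conf_ofE (i j : 'I_(hdim n)) : (conf_of i == conf_of j) = (i == j).
Proof.
apply/eqP/eqP => [/enum_val_inj //|-> //].
Qed.

Lemma cf_inj (c c' : Conf) : cf c = cf c' -> c = c'.
Proof. by move=> h; apply: val_inj. Qed.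

Definition pv (e : Edge) (a : bool) (c : Conf) : algC :=
  [forall k : 'I_m, (k.+1 == line e) ==> (cf c k == (e, a))]%:R.

Lemma ketbra_diag e a : ketbra e a e a = Dg (pv e a).
Proof.
apply/matrixP => i j; rewrite !mxE /pv.
have [->|ne] := eqVneq i j.
  rewrite mul1r; congr ((nat_of_bool _)%:R).
  apply/idP/idP => /forallP H; apply/forallP => k; move: (H k);
  by case: ifP => //=; rewrite andbb.
rewrite mul0r; case: forallP => // H; exfalso.
move: ne; rewrite -conf_ofE => /eqP; apply; apply: cf_inj; apply/ffunP => k.
by move: (H k); case: ifP => [_ /andP[/eqP-> /eqP->]|_ /eqP].
Qed.

Lemma DgD f g : Dg f + Dg g = Dg (fun c => f c + g c).
Proof. by apply/matrixP => i j; rewrite !mxE mulrDr. Qed.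

Lemma DgN f : - Dg f = Dg (fun c => - f c).
Proof. by apply/matrixP => i j; rewrite !mxE mulrN. Qed.

Lemma DgMn f k : Dg f *+ k = Dg (fun c => f c *+ k).
Proof. by apply/matrixP => i j; rewrite mulmxnE !mxE mulrnAr. Qed.

Lemma DgZ a f : a *: Dg f = Dg (fun c => a * f c).
Proof. by apply/matrixP => i j; rewrite !mxE mulrCA. Qed.

Lemma Dg_sum (I : Type) (r : seq I) (P : pred I) (F : I -> Conf -> algC) :
  \sum_(x <- r | P x) Dg (F x) = Dg (fun c => \sum_(x <- r | P x) F x c).
Proof.
elim: r => [|x r IH].
  by rewrite big_nil; apply/matrixP => i j; rewrite !mxE big_nil mulr0.
rewrite big_cons IH; case: ifP => Px.
  by rewrite DgD; apply: eq_Dg => c; rewrite big_cons Px.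
by apply: eq_Dg => c; rewrite big_cons Px.
Qed.

Lemma Dg_mull h (M : Op) : Dg h *m M = \matrix_(i, j) (h (conf_of i) * M i j).
Proof.
apply/matrixP => i j; rewrite !mxE (bigD1 i) //= big1 ?addr0.
  by rewrite !mxE eqxx mul1r.
by move=> k /negPf ne; rewrite !mxE eq_sym ne mul0r mul0r.
Qed.

Lemma Dg_mulr h (M : Op) : M *m Dg h = \matrix_(i, j) (M i j * h (conf_of j)).
Proof.
apply/matrixP => i j; rewrite !mxE (bigD1 j) //= big1 ?addr0.
  by rewrite !mxE eqxx mul1r.
by move=> k /negPf ne; rewrite !mxE ne mul0r mulr0.
Qed.

Lemma DgM f g : Dg f *m Dg g = Dg (fun c => f c * g c).
Proof.
rewrite Dg_mull; apply/matrixP => i j; rewrite !mxE.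
have [->|ne] := eqVneq i j; first by rewrite !mul1r.
by rewrite !mul0r mulr0.
Qed.

Lemma Dg_comm f g : Dg f *m Dg g = Dg g *m Dg f.
Proof. by rewrite !DgM; apply: eq_Dg => c; rewrite mulrC. Qed.

Lemma nop_diag e a : nop e a = Dg (pv e a).
Proof. exact: ketbra_diag. Qed.

Definition npv e c := pv e false c + pv e true c.

Lemma Nop_diag e : Nop e = Dg (npv e).
Proof. by rewrite /Nop !nop_diag DgD. Qed.

Definition nu (v : nat * nat) c := \sum_(e : Edge | edge_ok e && (lower e == v)) npv e c.
Definition nd (v : nat * nat) c := \sum_(e : Edge | edge_ok e && (upper e == v)) npv e c.

Definition intv (v : 'I_n.+1 * 'I_n.+1) : bool :=
  ((val v.1, val v.2) != (0%N, 0%N)) && ((val v.1, val v.2) != (n, n)).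

Definition hs c := \sum_(v : 'I_n.+1 * 'I_n.+1 | intv v)
    (nu (val v.1, val v.2) c + nd (val v.1, val v.2) c
     - (nu (val v.1, val v.2) c * nd (val v.1, val v.2) c) *+ 2).

Lemma Hstring_diag : Hstring n = Dg hs.
Proof.
rewrite /Hstring /hs -Dg_sum; apply: eq_bigr => v _.
rewrite /Nup /Ndown !(eq_bigr _ (fun e _ => Nop_diag e)) !Dg_sum.
rewrite DgM DgMn DgN DgD.
by rewrite DgD.
Qed.

End Work.

Local Open Scope ring_scope.

Section Work2.
Variable n : nat.
Local Notation m := (n.*2).
Local Notation Conf := (Conf n).
Local Notation Edge := (Edge n).
Local Notation Op := (Op n).

Definition ed (c : Conf) (k : nat) : Edge :=
  match (insub k : option 'I_m) with Some o => (cf c o).1 | None => (ord0, ord0, false) end.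

Lemma ed_ord c (o : 'I_m) : ed c o = (cf c o).1.
Proof. by rewrite /ed valK. Qed.

Lemma ed_prop c k : (k < m)%N -> edge_ok (ed c k) && (line (ed c k) == k.+1).
Proof.
move=> lt; have := valP c => /forallP /(_ (Ordinal lt)).
by rewrite -[Ordinal lt]/(Ordinal lt) -ed_ord.
Qed.

Lemma ed_ok c k : (k < m)%N -> edge_ok (ed c k).
Proof. by move/(ed_prop c)/andP=> []. Qed.

Lemma ed_line c k : (k < m)%N -> line (ed c k) = k.+1.
Proof. by move/(ed_prop c)/andP=> [_ /eqP]. Qed.

Lemma lower_sum (e : Edge) : ((lower e).1 + (lower e).2 = line e)%N.
Proof. rewrite /lower /line /=; case: (e_x e) => /=; lia. Qed.

Lemma upper_sum (e : Edge) : ((upper e).1 + (upper e).2).+1 = line e.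
Proof. by []. Qed.

Lemma ok_bounds (e : Edge) : edge_ok e ->
  [/\ ((lower e).1 <= n)%N, ((lower e).2 <= n)%N, ((upper e).1 <= n)%N,
      ((upper e).2 <= n)%N & (line e <= m)%N].
Proof.
rewrite /edge_ok /lower /upper /line /e_i /e_j /= => /andP[h1 h2].
have := ltn_ord e.1.1; have := ltn_ord e.1.2.
move: h1 h2; case: (e_x e) => /= *; split; lia.
Qed.

Lemma sum_pred1 (T : finType) (x : T) (P : pred T) :
  \sum_(y | P y) ((x == y)%:R : algC) = (P x)%:R.
Proof.
rewrite big_mkcond /= (bigD1 x) //= big1 ?addr0; first by rewrite eqxx; case: (P x).
by move=> y; rewrite eq_sym => /negPf ->; case: (P y).
Qed.

Lemma pv_ok (e : Edge) a c (lt : ((line e).-1 < m)%N) :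
  pv e a c = (cf c (Ordinal lt) == (e, a))%:R.
Proof.
rewrite /pv; congr ((nat_of_bool _)%:R); apply/forallP/idP => [H|H k].
  by move: (H (Ordinal lt)) => /implyP; apply.
apply/implyP => /eqP hk.
have ek : k = Ordinal lt.
  apply: val_inj => /=.
  by move: hk; rewrite /line => -[].
rewrite ek; exact: H.
Qed.

Lemma npv_ok (e : Edge) c : edge_ok e -> npv e c = (ed c (line e).-1 == e)%:R.
Proof.
move=> ok; have lt : ((line e).-1 < m)%N by case: (ok_bounds ok) => _ _ _ _; rewrite /line /=; lia.
rewrite /npv !(pv_ok _ _ lt) -[(line e).-1]/(nat_of_ord (Ordinal lt)) ed_ord.
case: (cf c _) => e' a'; rewrite !xpair_eqE -[(e', a').1]/e'.
by case: (e' == e); case: a'; rewrite ?andbT ?andbF ?add0r ?addr0.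
Qed.

Lemma nu_val (p : nat * nat) c : (0 < p.1 + p.2)%N -> (p.1 + p.2 < m)%N ->
  nu p c = (lower (ed c (p.1 + p.2).-1) == p)%:R.
Proof.
move=> h0 h1; rewrite /nu (eq_bigr (fun e => (ed c (p.1 + p.2).-1 == e)%:R)).
  rewrite sum_pred1 ed_ok //; lia.
by move=> e /andP[ok /eqP lo]; rewrite npv_ok // -(lower_sum e) lo.
Qed.

Lemma nd_val (p : nat * nat) c : (p.1 + p.2 < m)%N ->
  nd p c = (upper (ed c (p.1 + p.2)) == p)%:R.
Proof.
move=> h1; rewrite /nd (eq_bigr (fun e => (ed c (p.1 + p.2) == e)%:R)).
  by rewrite sum_pred1 ed_ok.
by move=> e /andP[ok /eqP lo]; rewrite npv_ok // -(upper_sum e) lo.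
Qed.

Definition brk (c : Conf) : nat :=
  \sum_(k < m.-1) (lower (ed c k) != upper (ed c k.+1)).


Lemma sum_vert (p : nat * nat) (P : pred ('I_n.+1 * 'I_n.+1)) :
  (p.1 <= n)%N -> (p.2 <= n)%N ->
  \sum_(v | P v) ((p == (val v.1, val v.2))%:R : algC) = (P (inord p.1, inord p.2))%:R.
Proof.
move=> h1 h2; rewrite -sum_pred1; apply: eq_bigr => [[a b]] _ /=.
case: p h1 h2 => p1 p2 /= h1 h2; rewrite !xpair_eqE; congr ((nat_of_bool _)%:R).
congr andb; apply/eqP/eqP => [->|<-]; rewrite ?inord_val ?inordK //.
Qed.

Lemma intv_inord (p : nat * nat) : (p.1 <= n)%N -> (p.2 <= n)%N ->
  (0 < p.1 + p.2)%N -> (p.1 + p.2 < m)%N -> intv (inord p.1 : 'I_n.+1, inord p.2 : 'I_n.+1).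
Proof.
case: p => p1 p2 /= h1 h2 h3 h4; rewrite /intv /= !inordK ?ltnS //.
rewrite !xpair_eqE; apply/andP; split; apply/negP => /andP[/eqP a /eqP b]; lia.
Qed.

Lemma natb0 : ((false : nat)%:R : algC) = 0. Proof. by []. Qed.
Lemma natb1 : ((true : nat)%:R : algC) = 1. Proof. by []. Qed.

Lemma hs_brk c : hs c = (brk c)%:R *+ 2.
Proof.
pose A k (v : 'I_n.+1 * 'I_n.+1) : algC := (lower (ed c k) == (val v.1, val v.2))%:R.
pose B k (v : 'I_n.+1 * 'I_n.+1) : algC := (upper (ed c k.+1) == (val v.1, val v.2))%:R.
pose T k v := A k v + B k v - (A k v * B k v) *+ 2.
rewrite /hs (eq_bigr (fun v => \sum_(k < m.-1) ((val v.1 + val v.2)%N == k.+1)%:R * T k v)); last first.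
  move=> [a b] /andP /= [h0 h1].
  have hb := ltn_ord a; have hb2 := ltn_ord b.
  have s0 : (0 < a + b)%N by move: h0; rewrite xpair_eqE; case: (nat_of_ord a) => //; case: (nat_of_ord b).
  have s1 : (a + b < m)%N.
    move: h1; rewrite xpair_eqE negb_and => /orP[] /eqP; lia.
  rewrite nu_val // nd_val //=.
  have lt : ((a + b).-1 < m.-1)%N by lia.
  rewrite (bigD1 (Ordinal lt)) //= big1 ?addr0.
    rewrite prednK // eqxx mul1r /T /A /B /=; by rewrite prednK.
  move=> k /eqP ne; have -> : ((a + b)%N == k.+1) = false.
    apply/eqP => e; apply: ne; apply: val_inj => /=; lia.
  by rewrite mul0r.
rewrite exchange_big /= /brk natr_sum -sumrMnl; apply: eq_bigr => k _.
have kl : (k < m)%N by have := ltn_ord k; lia.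
have kl1 : (k.+1 < m)%N by have := ltn_ord k; lia.
have [ok0 lin0] := andP (ed_prop c kl); have [ok1 lin1] := andP (ed_prop c kl1).
rewrite (eq_bigr (fun v => T k v)); last first.
  move=> [a b] _ /=.
  case: eqP => [_|ne]; first by rewrite mul1r.
  rewrite mul0r /T /A /B.
  have -> : (lower (ed c k) == (val a, val b)) = false.
    apply/negP => /eqP h; apply: ne.
    by move: (lower_sum (ed c k)); rewrite h /= (eqP lin0).
  have -> : (upper (ed c k.+1) == (val a, val b)) = false.
    apply/negP => /eqP h; apply: ne.
    by move: (upper_sum (ed c k.+1)); rewrite h /= (eqP lin1) => [[]].
  have -> : (false%:R : algC) = 0 by []. by rewrite mul0r mul0rn !addr0 subr0.
have [l1 l2 _ _ _] := ok_bounds ok0; have [_ _ u1 u2 _] := ok_bounds ok1.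
have hl := lower_sum (ed c k); have hu := upper_sum (ed c k.+1).
rewrite (eqP lin0) in hl; rewrite (eqP lin1) in hu.
rewrite /T sumrB big_split /= sumrMnl.
rewrite [X in _ - X *+ _](eq_bigr (fun v => (lower (ed c k) == upper (ed c k.+1))%:R * A k v)); last first.
  move=> v _; rewrite /A /B; case: (lower (ed c k) =P _) => [->|_]; last by rewrite natb0 !mul0r mulr0.
  by rewrite eq_sym natb1 mulr1 mul1r.
rewrite -mulr_sumr /A /B !sum_vert ?intv_inord //; try lia.
rewrite natb1 mulr1; case: eqP => _ /=; rewrite ?natb1 ?natb0. by rewrite mul0rn -mulr2n subrr. by rewrite mul0rn subr0 -mulr2n.
Qed.

End Work2.

Local Close Scope ring_scope.

Section Work3.
Variable n : nat.
Local Notation m := (n.*2).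
Local Notation Conf := (Conf n).
Local Notation Edge := (Edge n).
Variable c : Conf.

Definition br k := lower (ed c k) != upper (ed c k.+1).
Definition nbr k := \sum_(l < k) br l.

Lemma nbrS k : nbr k.+1 = nbr k + br k.
Proof. by rewrite /nbr big_ord_recr. Qed.

Lemma nbr0 : nbr 0 = 0.
Proof. by rewrite /nbr big_ord0. Qed.

Lemma brk_nbr : brk c = nbr m.-1.
Proof. by []. Qed.

Lemma nbr_mono k l : k <= l -> nbr k <= nbr l.
Proof.
elim: l => [|l IH]; first by rewrite leqn0 => /eqP ->.
rewrite leq_eqVlt => /orP[/eqP -> //|]; rewrite ltnS => /IH h.
by rewrite nbrS; apply: leq_trans h (leq_addr _ _).
Qed.

Lemma nbr_flat k l t : k <= t -> t < l -> nbr k = nbr l -> br t = false.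
Proof.
move=> h1 h2 e; have := nbr_mono h1; have := nbr_mono h2; rewrite nbrS -e.
case: (br t) => //= a b; exfalso; lia.
Qed.

Lemma nbr_ivt K y : y <= nbr K -> exists2 t, t <= K & nbr t = y.
Proof.
elim: K y => [|K IH] y.
  rewrite nbr0 leqn0 => /eqP ->. by exists 0; rewrite ?nbr0.
rewrite nbrS => hy; have [le|lt] := leqP y (nbr K).
  by have [t ht <-] := IH _ le; exists t => //; apply: leqW.
by exists K.+1 => //; rewrite nbrS; move: hy lt; case: (br K) => /=; lia.
Qed.

Definition lab (e : Edge) := nbr (line e).-1.

Lemma ed_occ k : k < m -> ed c k \in occupied c.
Proof.
move=> lt; apply/imsetP; exists (Ordinal lt) => //.
by rewrite -ed_ord.
Qed.

Lemma occP e : e \in occupied c -> exists2 k, k < m & e = ed c k.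
Proof. by case/imsetP => k _ ->; exists k => //; rewrite ed_ord. Qed.

Lemma share_sym : symmetric (@share n).
Proof.
move=> e f; rewrite /share ![upper f == _]eq_sym ![lower f == _]eq_sym.
by case: (upper e == upper f); case: (upper e == lower f);
   case: (lower e == upper f); case: (lower e == lower f).
Qed.

Lemma occ_sym : symmetric (occ_adj c).
Proof.
move=> e f; rewrite /occ_adj share_sym.
by case: (e \in occupied c); case: (f \in occupied c).
Qed.

Lemma csym : connect_sym (occ_adj c).
Proof. exact: sym_connect_sym occ_sym. Qed.

Lemma line_ed k : k < m -> (line (ed c k)).-1 = k.
Proof. by move/ed_line ->. Qed.

Lemma adj_lab e f : occ_adj c e f -> lab e = lab f.
Proof.
case/and3P => /occP[k hk ->] /occP[l hl ->].
rewrite /lab !line_ed //.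
have sk := upper_sum (ed c k); have sl := upper_sum (ed c l).
have lk := lower_sum (ed c k); have ll := lower_sum (ed c l).
rewrite !ed_line // in sk sl lk ll.
case/or4P => /eqP h.
- by rewrite h sl in sk; case: sk => ->.
- have E : k = l.+1 by move: sk ll; rewrite h; lia.
  by rewrite E nbrS /br -E h eqxx addn0.
- have E : l = k.+1 by move: lk sl; rewrite h; lia.
  by rewrite E nbrS /br -E h eqxx addn0.
- by move: lk ll; rewrite h => -> [->].
Qed.

Lemma lab_conn e f : e \in occupied c -> f \in occupied c -> lab e = lab f ->
  connect (occ_adj c) e f.
Proof.
move=> /occP[k hk ->] /occP[l hl ->]; rewrite /lab !line_ed //.
wlog kl : k l hk hl / k <= l.
  move=> W eq; have [le|lt] := leqP k l; first exact: W.
  by rewrite csym; apply: W => //; apply: ltnW.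
move=> eq; suff H : forall t, k <= t <= l -> connect (occ_adj c) (ed c k) (ed c t).
  by apply: H; rewrite leqnn kl.
elim=> [|t IH] /andP[h1 h2]; first by move: h1; rewrite leqn0 => /eqP ->.
move: h1; rewrite leq_eqVlt => /orP[/eqP -> //|]; rewrite ltnS => h1.
apply: connect_trans (IH _) _; first by rewrite h1 ltnW.
apply: connect1; rewrite /occ_adj !ed_occ //=; try lia.
have := nbr_flat h1 h2 eq; rewrite /br => /negbFE /eqP h.
by rewrite /share h eqxx !orbT.
Qed.

Lemma lab_bound e : e \in occupied c -> lab e <= brk c.
Proof.
by move/occP => [k hk ->]; rewrite /lab line_ed // brk_nbr; apply: nbr_mono; lia.
Qed.

Lemma ncomp_brk (hn : 0 < n) : ncomp c = (brk c).+1.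
Proof.
rewrite /ncomp /n_comp_mem.
set R := [set x | roots (occ_adj c) x && (x \in occupied c)].
have -> : #|predI (roots (occ_adj c)) (mem (occupied c))| = #|R|.
  by rewrite cardsE.
pose f (e : Edge) : 'I_(brk c).+1 := inord (lab e).
have inj : {in R &, injective f}.
  move=> x y; rewrite !inE => /andP[rx ox] /andP[ry oy] /(congr1 val).
  rewrite /f /= !inordK ?ltnS ?lab_bound // => /(lab_conn ox oy).
  move/(fingraph.rootP csym) => h; by rewrite -(eqP rx) -(eqP ry) h.
rewrite -(card_in_imset inj).
suff -> : [set f x | x in R] = [set: 'I_(brk c).+1] by rewrite cardsT card_ord.
apply/setP => y; rewrite inE; apply/imsetP.
have : (y : nat) <= nbr m.-1 by rewrite -brk_nbr -ltnS.
move/nbr_ivt => [t ht ty].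
have tm : t < m by move: ht hn; rewrite -addnn; lia.
have cl : closed (occ_adj c) (occupied c).
  move=> x z /and3P[ox oz _]; by rewrite ox oz.
have r1 := connect_root (occ_adj c) (ed c t).
exists (fingraph.root (occ_adj c) (ed c t)).
  rewrite inE roots_root //=; last exact: csym.
  by rewrite -(closed_connect cl r1) ed_occ.
apply: val_inj; rewrite /f /= inordK; last first.
  by rewrite ltnS lab_bound // -(closed_connect cl r1) ed_occ.
have cl2 : closed (occ_adj c) [pred z | lab z == lab (ed c t)].
  by move=> x z /adj_lab; rewrite !inE => ->.
have := closed_connect cl2 r1; rewrite !inE eqxx => /esym/eqP ->.
by rewrite /lab line_ed.
Qed.

End Work3.

Local Close Scope ring_scope.

Section Work4.
Variable n : nat.
Local Notation m := (n.*2).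
Local Notation Conf := (Conf n).
Local Notation Edge := (Edge n).

Definition cnt (P : pred 'I_m) (k : nat) := #|[set l : 'I_m | (l < k)%N & P l]|.

Lemma cnt0 P : cnt P 0 = 0.
Proof. by rewrite /cnt (_ : [set l | _ & _] = set0) ?cards0 //; apply/setP => l; rewrite !inE. Qed.

Lemma cntS P (o : 'I_m) : cnt P o.+1 = cnt P o + P o.
Proof.
rewrite /cnt; case Po: (P o).
  have -> : [set l : 'I_m | (l < o.+1)%N & P l] = o |: [set l : 'I_m | (l < o)%N & P l].
    apply/setP => l; rewrite !inE ltnS leq_eqVlt val_eqE.
    by case: (eqVneq l o) => [->|]; rewrite ?Po ?ltnn.
  by rewrite cardsU1 inE ltnn /= addnC.
rewrite addn0; apply: eq_card => l; rewrite !inE ltnS leq_eqVlt val_eqE.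
by case: (eqVneq l o) => [->|]; rewrite ?Po ?ltnn ?andbF.
Qed.

Lemma br_eq (c : Conf) k : br c k = false -> lower (ed c k) = upper (ed c k.+1).
Proof. by rewrite /br => /negbFE /eqP. Qed.

Lemma string_brk (c : Conf) (hn : 0 < n) : is_string c = (brk c == 0).
Proof.
apply/idP/idP.
  case/existsP => z /andP[_ /forallP H].
  rewrite brk_nbr /nbr sum_nat_eq0; apply/forallP => t; apply/implyP => _.
  have t1 : (t.+1 < m)%N by have := ltn_ord t; lia.
  have t0 : (t < m)%N by lia.
  move: (H (Ordinal t0)) (H (Ordinal t1)); rewrite -!ed_ord /= /str_edge.
  case/and3P => /eqP hi /eqP hj /eqP hx /and3P[/eqP hi' /eqP hj' _].
  rewrite eqb0 negbK /lower /upper hi hj hi' hj' hx.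
  have c1 := cntS (fun l => ~~ z l) (Ordinal t0); have c2 := cntS z (Ordinal t0).
  rewrite /cnt /= in c1 c2; rewrite /= c1 c2.
  by case: (z (Ordinal t0)) => /=; apply/eqP; congr pair; lia.
rewrite brk_nbr /nbr sum_nat_eq0 => /forallP H.
have nb (t : nat) : (t.+1 < m)%N -> br c t = false.
  move=> lt; have lt' : (t < m.-1)%N by lia.
  by move: (H (Ordinal lt')) => /=; rewrite eqb0 => /negbTE.
pose z := [ffun k : 'I_m => e_x (ed c k)].
have key : forall k, (k < m)%N ->
    e_i (ed c k) = cnt (fun l => ~~ z l) k /\ e_j (ed c k) = cnt z k.
  elim=> [|k IH] lt.
    have := upper_sum (ed c 0); rewrite ed_line // /upper !cnt0 => -[].
    by move=> h; split; lia.
  have lt0 : (k < m)%N by lia.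
  have [h1 h2] := IH lt0.
  have := br_eq (nb _ lt); rewrite /lower /upper => -[<- <-].
  rewrite -[k.+1]/((Ordinal lt0).+1) !cntS /= -h1 -h2 /z ffunE /=.
  by case: (e_x (ed c k)) => /=; split; lia.
apply/existsP; exists z; apply/andP; split; last first.
  apply/forallP => k; rewrite -ed_ord /str_edge.
  have [h1 h2] := key _ (ltn_ord k).
  by rewrite h1 h2 /z ffunE !eqxx.
have m0 : (0 < m)%N by rewrite -addnn; lia.
have lt0 : (m.-1 < m)%N by lia.
have [h1 h2] := key _ lt0.
have [_ _ _ _ _] := ok_bounds (ed_ok c lt0).
have := ed_ok c lt0; have := lower_sum (ed c m.-1); rewrite ed_line //.
rewrite /edge_ok /lower /= => hs /andP[b1 b2].
have -> : [set k | z k] = [set l : 'I_m | (l < m)%N & z l].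
  by apply/setP => l; rewrite !inE ltn_ord.
change (cnt z m == n).
have -> : cnt z m = cnt z (Ordinal lt0).+1 by congr cnt; rewrite /=; lia.
rewrite cntS /= -h2 /z ffunE /=.
by apply/eqP; move: hs b1 b2; rewrite -addnn; case: (e_x (ed c m.-1)) => /=; lia.
Qed.

End Work4.

Local Close Scope ring_scope.

Section Work5.
Variable n : nat.
Local Notation m := (n.*2).
Local Notation Conf := (Conf n).
Local Notation Edge := (Edge n).

Lemma brk_move (c c' : Conf) k0 E1 E2 E3 E4 : k0.+1 < m ->
  (forall t, t < m -> t != k0 -> t != k0.+1 -> ed c' t = ed c t) ->
  ed c k0 = E1 -> ed c k0.+1 = E2 -> ed c' k0 = E3 -> ed c' k0.+1 = E4 ->
  upper E1 = upper E3 -> lower E2 = lower E4 -> lower E1 = upper E2 ->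
  lower E3 = upper E4 -> brk c' = brk c.
Proof.
move=> hk H h1 h2 h3 h4 u13 l24 l12 l34.
rewrite /brk; apply: eq_bigr => t _.
have t1 : t.+1 < m by have := ltn_ord t; lia.
have t0 : t < m by lia.
have [e0|n0] := eqVneq (t : nat) k0.
  by rewrite e0 h1 h2 h3 h4 l12 l34 !eqxx.
have [e1|n1] := eqVneq (t : nat) k0.+1.
  rewrite e1 h2 h4 l24 H //; try lia; apply/eqP; lia.
rewrite (H t) //; have [e2|n2] := eqVneq t.+1 k0.
  by rewrite e2 h1 h3 u13.
by rewrite (H t.+1) //; apply/eqP; lia.
Qed.

Definition mkE (p : nat * nat * bool) : Edge := (inord p.1.1, inord p.1.2, p.2).

Lemma mkE_i p : p.1.1 <= n -> e_i (mkE p) = p.1.1.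
Proof. by move=> h; rewrite /e_i /= inordK. Qed.
Lemma mkE_j p : p.1.2 <= n -> e_j (mkE p) = p.1.2.
Proof. by move=> h; rewrite /e_j /= inordK. Qed.

Definition ew (k : nat) : nat * nat * bool :=
  if k == 0 then (0, 0, true) else if k < n then (k, 0, false) else (n, k - n, true).

Variable hn : 0 < n.

Lemma ew_b k : k < m -> (ew k).1.1 <= n /\ (ew k).1.2 <= n.
Proof.
rewrite /ew -addnn => h; case: eqP => _ /=; first by split.
case: ifP => h1 /=; split; lia.
Qed.

Definition wcf : {ffun 'I_m -> Edge * bool} := [ffun k : 'I_m => (mkE (ew k), false)].

Lemma ew_ok k : k < m -> edge_ok (mkE (ew k)) && (line (mkE (ew k)) == k.+1).
Proof.
move=> lt; have [b1 b2] := ew_b lt.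
rewrite /edge_ok /line /e_x mkE_i // mkE_j //.
move: lt; rewrite -addnn /ew.
case: eqP => [->|nz] /= => [_|]; first by repeat (apply/andP; split); try apply/eqP; lia.
by case: ifP => h1 /= h2; repeat (apply/andP; split); try apply/eqP; lia.
Qed.

Lemma wcf_ok : conf_ok wcf.
Proof. by apply/forallP => k; rewrite ffunE /=; apply: ew_ok. Qed.

Definition wc : Conf := exist _ wcf wcf_ok.

Lemma ed_wc k : k < m -> ed wc k = mkE (ew k).
Proof. by move=> lt; rewrite -[k]/(nat_of_ord (Ordinal lt)) ed_ord /cf /= ffunE. Qed.

Lemma br_wc t : t < m.-1 -> (lower (ed wc t) == upper (ed wc t.+1)) = (t != 0).
Proof.
move=> lt; have t0 : t < m by lia.
have t1 : t.+1 < m by lia.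
rewrite !ed_wc //.
have [a1 a2] := ew_b t0; have [b1 b2] := ew_b t1.
rewrite /lower /upper !mkE_i // !mkE_j // /e_x /= xpair_eqE.
move: a1 a2 b1 b2 t1; rewrite /ew -addnn /=.
case: eqP => [->|nz] /=.
  by case: ifP => h /= *; try (apply/negbTE/negP => /andP[/eqP q1 /eqP q2]; lia).
by case: ifP => h1; case: ifP => h2 /= *; apply/andP; split; apply/eqP; lia.
Qed.

Lemma brk_wc : brk wc = 1.
Proof.
have m1 : 0 < m.-1 by rewrite -addnn; lia.
rewrite /brk (bigD1 (Ordinal m1)) //= big1 ?addn0.
  by rewrite br_wc.
move=> t; rewrite -val_eqE /= => nz.
by rewrite br_wc ?nz.
Qed.

End Work5.

Local Open Scope ring_scope.

Section Work6.
Variable n : nat.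
Local Notation m := (n.*2).
Local Notation Conf := (Conf n).
Local Notation Edge := (Edge n).
Local Notation Op := (Op n).
Local Notation D := (Dg (@hs n)).

Lemma hs_nat (c : Conf) : hs c = (brk c * 2)%:R.
Proof. by rewrite hs_brk natrM mulr_natr. Qed.

Lemma hs_conj (c : Conf) : (hs c)^* = hs c.
Proof. by rewrite hs_nat conjC_nat. Qed.

Definition comm (X : Op) := D *m X = X *m D.

Lemma commE X : comm X <-> forall i j, hs (conf_of i) * X i j = X i j * hs (conf_of j).
Proof.
rewrite /comm Dg_mull Dg_mulr; split.
  by move=> /matrixP H i j; move: (H i j); rewrite !mxE.
by move=> H; apply/matrixP => i j; rewrite !mxE.
Qed.

Lemma commD X Y : comm X -> comm Y -> comm (X + Y).
Proof. by rewrite /comm mulmxDr mulmxDl => -> ->. Qed.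

Lemma commN X : comm X -> comm (- X).
Proof. by rewrite /comm mulmxN mulNmx => ->. Qed.

Lemma commZ a X : comm X -> comm (a *: X).
Proof. by rewrite /comm => h; rewrite -scalemxAr h scalemxAl. Qed.

Lemma commM X Y : comm X -> comm Y -> comm (X *m Y).
Proof. by rewrite /comm => hx hy; rewrite mulmxA hx -!mulmxA hy. Qed.

Lemma comm0 : comm 0.
Proof. by rewrite /comm mulmx0 mul0mx. Qed.

Lemma comm_sum (I : Type) (r : seq I) (P : pred I) (F : I -> Op) :
  (forall i, P i -> comm (F i)) -> comm (\sum_(i <- r | P i) F i).
Proof. move=> H; apply: (big_ind comm) => //; [exact: comm0|exact: commD]. Qed.

Lemma commDg f : comm (Dg f).
Proof. exact: Dg_comm. Qed.

Lemma commT X : comm X -> comm (map_mx Num.conj (trmx X)).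
Proof.
move/commE => H; apply/commE => i j; rewrite !mxE.
rewrite -[hs (conf_of i)]hs_conj -[hs (conf_of j)]hs_conj -!rmorphM; congr (_^*).
by rewrite [LHS]mulrC -(H j i) mulrC.
Qed.

Lemma comm_gen (X : Op) :
  (forall i j, X i j != 0 -> brk (conf_of i) = brk (conf_of j)) -> comm X.
Proof.
move=> H; apply/commE => i j; have [->|/H e] := eqVneq (X i j) 0.
  by rewrite mulr0 mul0r.
by rewrite !hs_nat e mulrC.
Qed.

End Work6.

Local Open Scope ring_scope.

Section Work7.
Variable n : nat.
Local Notation m := (n.*2).
Local Notation Conf := (Conf n).
Local Notation Edge := (Edge n).
Local Notation Op := (Op n).

Lemma pl_facts (i j : 'I_n) :
  [/\ line (pl_e1 i j) = (i + j).+1, line (pl_e2 i j) = (i + j).+2,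
      line (pl_e3 i j) = (i + j).+1, line (pl_e4 i j) = (i + j).+2 &
   [/\ upper (pl_e1 i j) = upper (pl_e3 i j), lower (pl_e2 i j) = lower (pl_e4 i j),
      lower (pl_e1 i j) = upper (pl_e2 i j) & lower (pl_e3 i j) = upper (pl_e4 i j)]].
Proof.
rewrite /line /upper /lower /pl_e1 /pl_e2 /pl_e3 /pl_e4 /e_i /e_j /e_x /= /bump !leq0n /=.
split; try (congr pair; lia); try lia.
split; congr pair; lia.
Qed.

Lemma move_rel (i0 j0 : 'I_n) (c' c'' c : Conf) a b g d :
  [forall k : 'I_m, if k.+1 == line (pl_e1 i0 j0)
     then (cf c' k == (pl_e3 i0 j0, b)) && (cf c'' k == (pl_e1 i0 j0, a))
     else cf c' k == cf c'' k] ->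
  [forall k : 'I_m, if k.+1 == line (pl_e2 i0 j0)
     then (cf c'' k == (pl_e4 i0 j0, d)) && (cf c k == (pl_e2 i0 j0, g))
     else cf c'' k == cf c k] ->
  brk c' = brk c.
Proof.
have [l1 l2 l3 l4 [u13 l24 l12 l34]] := pl_facts i0 j0.
rewrite l1 l2 => /forallP H1 /forallP H2.
set k0 := (i0 + j0)%N.
have hk : (k0.+1 < m)%N by rewrite /k0 -addnn; have := ltn_ord i0; have := ltn_ord j0; lia.
have E (t : nat) (lt : (t < m)%N) :
  [/\ (t != k0)%N -> (t != k0.+1)%N -> ed c' t = ed c t,
      t = k0 -> ed c t = pl_e1 i0 j0 /\ ed c' t = pl_e3 i0 j0 &
      t = k0.+1 -> ed c t = pl_e2 i0 j0 /\ ed c' t = pl_e4 i0 j0].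
  set o := Ordinal lt.
  have edo (c0 : Conf) : ed c0 t = (cf c0 o).1 by exact: (ed_ord c0 o).
  have := H1 o; have := H2 o; rewrite /= !eqSS !edo.
  have [e0|n0] := eqVneq t k0.
    rewrite (_ : (t == k0.+1) = false); last by apply/negbTE; lia.
    move=> /eqP h2 /andP[/eqP h3 /eqP h4]; split.
    - by [].
    - by move=> _; rewrite -h2 h4 h3.
    - by move=> e; exfalso; lia.
  have [e1|n1] := eqVneq t k0.+1.
    move=> /andP[/eqP h3 /eqP h4] /eqP h2; split.
    - by [].
    - by move=> e; exfalso; lia.
    - by move=> _; rewrite h4 h2 h3.
  move=> /eqP h2 /eqP h1; split.
  - by move=> _ _; rewrite h1 h2.
  - by move=> e; rewrite e eqxx in n0.
  - by move=> e; rewrite e eqxx in n1.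
have [_ h13 _] := E _ (ltnW hk); have [h1 h3] := h13 erefl.
have [_ _ h24] := E _ hk; have [h2 h4] := h24 erefl.
apply: (brk_move hk _ h1 h2 h3 h4) => //.
by move=> t lt; case: (E t lt).
Qed.

End Work7.

Local Open Scope ring_scope.

Section Work8.
Variable n : nat.
Local Notation m := (n.*2).
Local Notation Conf := (Conf n).
Local Notation Edge := (Edge n).
Local Notation Op := (Op n).

Lemma natb_neq0 (b : bool) : ((b : nat)%:R : algC) != 0 -> b.
Proof. by case: b => //; rewrite eqxx. Qed.

Lemma comm_K (i0 j0 : 'I_n) a b g d :
  comm (ketbra (pl_e3 i0 j0) b (pl_e1 i0 j0) a *m ketbra (pl_e4 i0 j0) d (pl_e2 i0 j0) g).
Proof.
apply: comm_gen => i j; rewrite mxE => nz.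
set K1 := ketbra _ _ _ _ in nz; set K2 := ketbra _ _ _ _ in nz.
case: (pickP (fun k => K1 i k * K2 k j != 0)) => [k|none]; last first.
  by move: nz; rewrite big1 ?eqxx // => k _; apply/eqP; move: (none k) => /negbFE.
rewrite mulf_eq0 negb_or => /andP[n1 n2].
move: n1 n2; rewrite /K1 /K2 !mxE => /natb_neq0 h1 /natb_neq0 h2.
exact: (move_rel h1 h2).
Qed.

Lemma comm_Hprop U (i0 j0 : 'I_n) : comm (Hprop U i0 j0).
Proof.
have cA : comm (\sum_(a : bool) \sum_(b : bool) \sum_(g : bool) \sum_(d : bool)
     (U (qidx b d) (qidx a g) *: (ketbra (pl_e3 i0 j0) b (pl_e1 i0 j0) a
                                   *m ketbra (pl_e4 i0 j0) d (pl_e2 i0 j0) g))).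
  do 4! (apply: comm_sum => ? _); apply: commZ; exact: comm_K.
by rewrite /Hprop; apply: commD; apply: commN => //; apply: commT.
Qed.

End Work8.

Local Open Scope ring_scope.

Section Work9.
Variable n : nat.
Local Notation Conf := (Conf n).

Lemma Dg_mull_gen h p (M : 'M[algC]_(hdim n, p)) :
  Dg h *m M = \matrix_(i, j) (h (conf_of i) * M i j).
Proof.
apply/matrixP => i j; rewrite !mxE (bigD1 i) //= big1 ?addr0.
  by rewrite !mxE eqxx mul1r.
by move=> k /negPf ne; rewrite !mxE eq_sym ne mul0r mul0r.
Qed.

Lemma Dg_mulr_gen h p (M : 'M[algC]_(p, hdim n)) :
  M *m Dg h = \matrix_(i, j) (M i j * h (conf_of j)).
Proof.
apply/matrixP => i j; rewrite !mxE (bigD1 j) //= big1 ?addr0.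
  by rewrite !mxE eqxx mul1r.
by move=> k /negPf ne; rewrite !mxE ne mul0r mulr0.
Qed.

Lemma hs_eq0 (c : Conf) (hn : (0 < n)%N) : (hs c == 0) = is_string c.
Proof. by rewrite hs_nat pnatr_eq0 muln_eq0 orbF string_brk. Qed.

End Work9.

Unset Implicit Arguments.

Theorem mainTheorem3 (n : nat) (hn : (1 <= n)%N) :
  psdmx (Hstring n)
  /\ (forall v : 'cV[algC]_(hdim n),
        Hstring n *m v = 0 <->
        (forall i : 'I_(hdim n), ~~ is_string (conf_of i) -> v i ord0 = 0))
  /\ eigenvalue (Hstring n) 2
  /\ (forall a : algC, eigenvalue (Hstring n) a -> a != 0 -> 2 <= a)
  /\ (forall c : Conf n,
        Hstring n *m ket c = ((ncomp c)%:R *+ 2 - 2) *: ket c)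
  /\ (forall (e : Edge n) (a : bool), edge_ok e ->
        Hstring n *m nop e a = nop e a *m Hstring n)
  /\ (forall (U : 'M[algC]_4) (i j : 'I_n), U \is unitarymx ->
        Hstring n *m Hprop U i j = Hprop U i j *m Hstring n)
  /\ (forall (U : 'I_n -> 'I_n -> 'M[algC]_4) (lam : algC),
        (forall i j, U i j \is unitarymx) -> 0 <= lam <= 1 ->
        Hstring n *m Hlam U lam = Hlam U lam *m Hstring n).
Proof.
rewrite Hstring_diag.
split.
  split.
    apply/matrixP => i j; rewrite !mxE rmorphM /= conjC_nat hs_conj eq_sym.
    by case: eqVneq => [->|]; rewrite ?mul0r.
  move=> v; rewrite Dg_mulr_gen mxE; apply: sumr_ge0 => j _; rewrite !mxE.
  have -> : (v j 0)^* * hs (conf_of j) * v j 0 = hs (conf_of j) * (v j 0 * (v j 0)^*) by ring.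
  by apply: mulr_ge0; [rewrite hs_nat ler0n|apply: mul_conjC_ge0].
split.
  move=> v; rewrite Dg_mull_gen; split.
    move/matrixP => H i ns; have := H i ord0; rewrite !mxE => /eqP.
    by rewrite mulf_eq0 hs_eq0 // (negbTE ns) => /eqP.
  move=> H; apply/matrixP => i j; rewrite !mxE ord1.
  case: (boolP (is_string (conf_of i))) => s.
    by rewrite -(hs_eq0 _ hn) in s; rewrite (eqP s) mul0r.
  by rewrite H // mulr0.
split.
  apply/eigenvalueP.
  pose j0 : 'I_(hdim n) := enum_rank (wc hn).
  have cj0 : conf_of j0 = wc hn by rewrite /conf_of /j0 enum_rankK.
  exists (\row_j ((j == j0)%:R : algC)).
    rewrite Dg_mulr_gen; apply/matrixP => i j; rewrite !mxE.
    case: eqVneq => [->|]; last by rewrite !mul0r mulr0.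
    by rewrite cj0 hs_nat brk_wc mul1r mulr1.
  apply/eqP => /matrixP /(_ 0 j0); rewrite !mxE eqxx => /eqP.
  by rewrite oner_eq0.
split.
  move=> a /eigenvalueP [v hv nz] a0.
  have [j vj] : exists j, v 0 j != 0.
    apply/existsP; apply: contraR nz => /existsPn H.
    by apply/eqP/matrixP => i j; rewrite ord1 !mxE; apply/eqP/negPn/H.
  move/matrixP: hv => /(_ 0 j); rewrite Dg_mulr_gen !mxE mulrC => /(mulIf vj) ha.
  rewrite -ha hs_nat ler_nat; rewrite -ha hs_nat pnatr_eq0 in a0; lia.
split.
  move=> c; rewrite Dg_mull_gen; apply/matrixP => i j; rewrite !mxE.
  case: eqVneq => [->|]; last by rewrite !mulr0.
  rewrite ncomp_brk // hs_nat ?natb1 ?mul1r ?mulr1 natrM -addn1 natrD; ring.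
split.
  by move=> e a _; rewrite nop_diag; exact: Dg_comm.
split.
  by move=> U i j _; exact: comm_Hprop.
move=> U lam _ _; change (comm (Hlam U lam)); rewrite /Hlam.
have cN (e : Edge n) : comm (Nop e) by rewrite Nop_diag; exact: commDg.
have cS : comm (Hstring n) by rewrite Hstring_diag; exact: commDg.
apply: commD; last by apply: comm_sum => e _; rewrite nop_diag; exact: commDg.
apply: commD; last by apply: commZ; apply: commD; apply: comm_sum => e _.
apply: commD => //.
apply: comm_sum => i _; apply: comm_sum => j _.
apply: commD; last by apply: commZ; exact: comm_Hprop.
by apply: commD; apply: commM.
Qed.
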